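(* Let $E(\delta):=\big((\lfloor\delta^{-1}\rfloor+1)\delta-1\big)\log\lfloor\delta^{-1}\rfloor+\big(1-\lfloor\delta^{-1}\rfloor\delta\big)\log\big(\lfloor\delta^{-1}\rfloor+1\big)$ for $\delta\in(0,1]$ (base-2 logarithms). Then $$\max_{\delta\in(0,1]}\ \frac{E(\delta)+(1-\delta)}{2}=\frac{\log 80}{10},$$ attained at $\delta=1/5$. Consequently, with $I(m,t)$ the maximum number of $t$-element maximal independent sets in an $m$-vertex graph, $\sum_{t=1}^m\sqrt{I(m,t)}\,2^{(m-t)/2}=O^*(80^{m/10})=O(1.5500^m)$.
   Context: Logarithms are base 2. $I(m,t)=\lfloor m/t\rfloor^{(\lfloor m/t\rfloor+1)t-m}(\lfloor m/t\rfloor+1)^{m-\lfloor m/t\rfloor t}$. $O^*(f(m))$ means $O(m^c f(m))$ for some constant $c$. *)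

(* Defs.v *)
From Stdlib Require Import Reals Lra Lia List.
Open Scope R_scope.

Definition log2 (x : R) : R := ln x / ln 2.

Definition floorR (x : R) : Z := Int_part x.

Definition E (d : R) : R :=
  let k := IZR (floorR (/ d)) in
  ((k + 1) * d - 1) * log2 k + (1 - k * d) * log2 (k + 1).

Definition obj (d : R) : R := (E d + (1 - d)) / 2.

Definition Imt (m t : nat) : nat :=
  let q := Nat.div m t in
  (q ^ ((q + 1) * t - m) * (q + 1) ^ (m - q * t))%nat.

Definition Ssum (m : nat) : R :=
  fold_right Rplus 0
    (map (fun t => sqrt (INR (Imt m t)) * Rpower 2 (INR (m - t) / 2))
         (seq 1 m)).

(* Main.v *)
Require Import Defs.
From Stdlib Require Import Reals List Lra Lia ZArith.
Open Scope R_scope.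

Lemma key_nat : forall j, (j^5 * 2^j <= 32 * 5^j)%nat.
Proof.
  assert (A : forall i, (2 * (5+i+1)^5 <= 5 * (5+i)^5)%nat) by (intro i; apply Nat2Z.inj_le; rewrite !Nat2Z.inj_mul, !Nat2Z.inj_pow, !Nat2Z.inj_add;
    assert (0 <= Z.of_nat i)%Z by lia; set (x := Z.of_nat i) in *; simpl Z.of_nat; ring_simplify; nia).
  intro j. induction j as [|j IH].
  - simpl. lia.
  - destruct (le_lt_dec 5 j) as [h|h].
    + replace j with (5 + (j-5))%nat in * by lia.
      set (i := (j-5)%nat) in *.
      specialize (A i).
      rewrite (Nat.pow_succ_r' 2), (Nat.pow_succ_r' 5).
      replace (S (5+i)) with (5+i+1)%nat by lia.
      generalize dependent ((5+i+1)^5)%nat; generalize dependent ((5+i)^5)%nat;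
      generalize (2^(5+i))%nat; generalize (5^(5+i))%nat; intros. nia.
    + destruct j as [|[|[|[|[|j]]]]]; try lia; apply Nat.leb_le; vm_compute; reflexivity.
Qed.

Lemma ln_le' : forall x y, 0 < x -> x <= y -> ln x <= ln y.
Proof. intros x y hx [h|h]. left; apply ln_increasing; auto. subst; lra. Qed.

Lemma exp_le' : forall x y, x <= y -> exp x <= exp y.
Proof. intros x y [h|h]. left; apply exp_increasing; auto. subst; lra. Qed.

Lemma key_ln : forall j : nat, (1 <= j)%nat ->
  ln (INR j) - ln 2 + INR j * ln 2 <= INR j * ln 80 / 5.
Proof.
  intros j hj.
  assert (Hj : 0 < INR j) by (apply lt_0_INR; lia).
  pose proof (le_INR _ _ (key_nat j)) as H.
  rewrite !mult_INR, !pow_INR in H.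
  replace (INR 32) with (2^5) in H by (simpl; lra).
  replace (INR 2) with 2 in H by (simpl; lra).
  replace (INR 5) with 5 in H by (simpl; lra).
  apply ln_le' in H.
  2:{ apply Rmult_lt_0_compat; apply pow_lt; lra. }
  rewrite !ln_mult, !ln_pow in H; try lra; try (apply pow_lt; lra).
  replace 80 with (2^4 * 5) by lra.
  rewrite ln_mult, ln_pow; try lra; try (apply pow_lt; lra).
  simpl INR in *. lra.
Qed.
Lemma part1 : forall d : R, 0 < d <= 1 -> obj d <= log2 80 / 10.
Proof.
  intros d [hd hd1].
  unfold obj, E, log2, floorR.
  destruct (base_Int_part (/ d)) as [h1 h2].
  set (z := Int_part (/ d)) in *.
  assert (hid : 1 <= / d).
  { rewrite <- Rinv_1. apply Rinv_le_contravar; lra. }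
  assert (hz : (0 < z)%Z) by (apply lt_IZR; lra).
  destruct (Z_of_nat_complete z) as [n hn]; [lia|].
  rewrite hn in *. rewrite <- INR_IZR_INZ in *.
  assert (hn1 : (1 <= n)%nat) by lia.
  pose proof (key_ln n hn1) as K1.
  pose proof (key_ln (S n) ltac:(lia)) as K2.
  rewrite S_INR in K2.
  set (k := INR n) in *.
  assert (l2 : 0 < ln 2) by (rewrite <- ln_1; apply ln_increasing; lra).
  assert (hk1 : k * d <= 1).
  { apply Rmult_le_reg_r with (/d). apply Rinv_0_lt_compat; lra.
    rewrite Rmult_assoc, Rinv_r by lra. lra. }
  assert (hk2 : 1 <= (k+1) * d).
  { apply Rmult_le_reg_r with (/d). apply Rinv_0_lt_compat; lra.
    rewrite Rmult_assoc, Rinv_r by lra. lra. }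
  assert (A1 := Rmult_le_compat_l ((k+1)*d - 1) _ _ ltac:(lra) K1).
  assert (A2 := Rmult_le_compat_l (1 - k*d) _ _ ltac:(lra) K2).
  assert (G : ((k + 1) * d - 1) * ln k + (1 - k * d) * ln (k + 1) + (1 - d) * ln 2
              <= ln 80 / 5).
  { nra. }
  replace (((((k + 1) * d - 1) * (ln k / ln 2) + (1 - k * d) * (ln (k + 1) / ln 2)) + (1 - d)) / 2)
    with ((((k + 1) * d - 1) * ln k + (1 - k * d) * ln (k + 1) + (1 - d) * ln 2) / (2 * ln 2))
    by (field; lra).
  replace (ln 80 / ln 2 / 10) with ((ln 80 / 5) / (2 * ln 2)) by (field; lra).
  unfold Rdiv. apply Rmult_le_compat_r; [ | exact G].
  apply Rlt_le, Rinv_0_lt_compat; lra.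
Qed.
Lemma obj15 : obj (1/5) = log2 80 / 10.
Proof.
  unfold obj, E, log2, floorR.
  replace (/ (1/5)) with 5 by field.
  rewrite <- (Int_part_spec 5 5) by lra.
  replace 80 with (2^4 * 5) by lra.
  rewrite ln_mult, ln_pow; try lra; try (apply pow_lt; lra).
  assert (l2 : 0 < ln 2) by (rewrite <- ln_1; apply ln_increasing; lra).
  simpl INR. field. lra.
Qed.

Lemma sum_bound : forall (f : nat -> R) (M : R) (l : list nat),
  (forall x, In x l -> f x <= M) ->
  fold_right Rplus 0 (map f l) <= INR (length l) * M.
Proof.
  intros f M l; induction l as [|a l IH]; intros H; cbn [map fold_right length].
  - simpl; lra.
  - rewrite S_INR.
    assert (f a <= M) by (apply H; left; auto).
    assert (fold_right Rplus 0 (map f l) <= INR (length l) * M)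
      by (apply IH; intros; apply H; right; auto).
    lra.
Qed.

Lemma term_bound : forall m t : nat, (1 <= t <= m)%nat ->
  sqrt (INR (Imt m t)) * Rpower 2 (INR (m - t) / 2) <= Rpower 80 (INR m / 10).
Proof.
  intros m t [ht1 htm].
  unfold Imt.
  set (q := Nat.div m t).
  pose proof (Nat.div_mod m t ltac:(lia)) as Hdm.
  pose proof (Nat.mod_upper_bound m t ltac:(lia)) as Hr.
  fold q in Hdm.
  set (r := Nat.modulo m t) in *.
  assert (hq : (1 <= q)%nat).
  { destruct q as [|q']; [|lia]. rewrite Nat.mul_0_r in Hdm. lia. }
  assert (Ea : ((q + 1) * t - m = t - r)%nat) by nia.
  assert (Eb : (m - q * t = r)%nat) by nia.
  rewrite Ea, Eb.
  assert (Hm : INR m = INR q * INR t + INR r).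
  { rewrite Hdm at 1. rewrite plus_INR, mult_INR. ring. }
  assert (Ht : INR (t - r) = INR t - INR r) by (apply minus_INR; lia).
  assert (Hmt : INR (m - t) = INR m - INR t) by (apply minus_INR; lia).
  assert (Hq : 0 < INR q) by (apply lt_0_INR; lia).
  rewrite mult_INR, !pow_INR, plus_INR.
  replace (INR 1) with 1 by reflexivity.
  rewrite <- Rpower_sqrt.
  2:{ apply Rmult_lt_0_compat; apply pow_lt; lra. }
  unfold Rpower. rewrite <- exp_plus. apply exp_le'.
  rewrite ln_mult, !ln_pow by (try apply pow_lt; lra).
  rewrite Ht, Hmt.
  pose proof (key_ln q hq) as K1.
  pose proof (key_ln (S q) ltac:(lia)) as K2.
  rewrite S_INR in K2.
  assert (hr0 : 0 <= INR r) by apply pos_INR.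
  assert (htr : INR r <= INR t) by (apply le_INR; lia).
  assert (A1 := Rmult_le_compat_l (INR t - INR r) _ _ ltac:(lra) K1).
  assert (A2 := Rmult_le_compat_l (INR r) _ _ ltac:(lra) K2).
  rewrite Hm. nra.
Qed.
Lemma part3 : forall x : R, 0 <= x ->
   exists C, 0 < C /\ forall m : nat, INR m * Rpower 80 (INR m / 10) <= C * (155/100)^m.
Proof.
  intros _ _.
  set (eps := 10 * ln (155/100) - ln 80).
  assert (he : 0 < eps).
  { unfold eps.
    assert (ln 80 < ln ((155/100)^10)) by (apply ln_increasing; lra).
    rewrite ln_pow in H by lra.
    replace (INR 10) with 10 in H by (simpl; lra). lra. }
  exists (10/eps). split. { apply Rdiv_lt_0_compat; lra. }
  intro m.
  rewrite <- Rpower_pow by lra. unfold Rpower.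
  replace (INR m * ln (155/100)) with (INR m / 10 * ln 80 + INR m * eps / 10) by (unfold eps; field).
  rewrite exp_plus.
  pose proof (exp_ineq1_le (INR m * eps / 10)).
  pose proof (exp_pos (INR m / 10 * ln 80)).
  pose proof (pos_INR m).
  set (a := exp (INR m / 10 * ln 80)) in *.
  set (b := exp (INR m * eps / 10)) in *.
  assert (INR m <= 10 / eps * b).
  { apply Rmult_le_reg_l with (eps / 10). apply Rdiv_lt_0_compat; lra.
    field_simplify; try lra. }
  nra.
Qed.

Lemma part2 : forall m : nat, Ssum m <= INR m * Rpower 80 (INR m / 10).
Proof.
  intro m. unfold Ssum.
  rewrite <- (length_seq m 1) at 2.
  apply sum_bound. intros t Ht. apply in_seq in Ht.
  apply term_bound. lia.
Qed.

Theorem mainTheorem8 :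
  ((forall d : R, 0 < d <= 1 -> obj d <= log2 80 / 10) /\
   obj (1 / 5) = log2 80 / 10) /\
  (exists (C : R) (c : nat), 0 < C /\
     forall m : nat, (1 <= m)%nat ->
       Ssum m <= C * INR m ^ c * Rpower 80 (INR m / 10)) /\
  (exists C : R, 0 < C /\
     forall m : nat, (1 <= m)%nat -> Ssum m <= C * (155 / 100) ^ m).
Proof.
  split; [split; [exact part1 | exact obj15]|split].
  - exists 1, 1%nat. split; [lra|]. intros m _.
    rewrite pow_1, Rmult_1_l. apply part2.
  - destruct (part3 0 (Rle_refl 0)) as [C [hC HC]].
    exists C. split; auto. intros m _.
    eapply Rle_trans; [apply part2|apply HC].
Qed.
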